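(* Let $r\ge 1$ and $n\ge 3r+6$ be integers. Then $\rho(H_{n,r})\ge \rho(H'_{n,r})$, with equality if and only if $n=3r+6$.
   Context: $\rho$ denotes the spectral radius (largest adjacency eigenvalue). $K_1\vee rK_3$ is the join of a single vertex with $r$ disjoint triangles; let $u$ be its vertex of degree $3r$ (any vertex if $r=1$). In $K_{3,n-3r-3}$ (complete bipartite with parts of sizes $3$ and $n-3r-3$), let $vw$ be an edge where $v$ has degree $n-3r-3$ and $w$ has degree $3$. $H_{n,r}$ is the graph obtained from the disjoint union of $K_1\vee rK_3$ and $K_{3,n-3r-3}$ by identifying $u$ with $v$, and $H'_{n,r}$ is obtained by identifying $u$ with $w$. *)

(* Defs.v *)
From HB Require Import structures.
From mathcomp Require Import all_boot all_order all_algebra.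
From mathcomp Require Import classical_sets reals.
Set Implicit Arguments. Unset Strict Implicit. Unset Printing Implicit Defensive.
Import Order.TTheory GRing.Theory Num.Theory.
Local Open Scope ring_scope.

Definition adjmx (R : realType) (n : nat) (e : nat -> nat -> bool) : 'M[R]_n :=
  \matrix_(i < n, j < n) (e i j)%:R.

(* Spectral radius = largest (real) adjacency eigenvalue; for a real
   symmetric matrix all eigenvalues are real, so this is the maximum of
   the finite set of real eigenvalues. *)
Definition spec_rad (R : realType) (n : nat) (A : 'M[R]_n) : R :=
  sup [set a : R | eigenvalue A a].

(* Vertex labelling (vertices 0..n-1):
   vertex 0 = the identified vertex u;
   triangle k (k < r) = {3k+1, 3k+2, 3k+3};
   remaining vertices 3r+1 .. n-1 belong to K_{3,n-3r-3}. *)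
Definition edge_K1rK3 (r i j : nat) : bool :=
  (i != j) &&
  [|| (i == 0) && (1 <= j <= 3 * r),
      (j == 0) && (1 <= i <= 3 * r)
    | [&& 1 <= i <= 3 * r, 1 <= j <= 3 * r & (i.-1 %/ 3 == j.-1 %/ 3)]]%N.

Definition edge_bip (A B : pred nat) (i j : nat) : bool :=
  (A i && B j) || (A j && B i).

(* H_{n,r}: u identified with v (a vertex of the 3-side, degree n-3r-3). *)
Definition H_A (r : nat) : pred nat := fun i => [|| i == 0, i == 3 * r + 1 | i == 3 * r + 2]%N.
Definition H_B (r : nat) : pred nat := fun i => (3 * r + 3 <= i)%N.
Definition edgeH (r i j : nat) : bool := edge_K1rK3 r i j || edge_bip (H_A r) (H_B r) i j.

(* H'_{n,r}: u identified with w (a vertex of the big side, degree 3). *)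
Definition H'_A (r : nat) : pred nat :=
  fun i => [|| i == 3 * r + 1, i == 3 * r + 2 | i == 3 * r + 3]%N.
Definition H'_B (r : nat) : pred nat := fun i => (i == 0) || (3 * r + 4 <= i)%N.
Definition edgeH' (r i j : nat) : bool := edge_K1rK3 r i j || edge_bip (H'_A r) (H'_B r) i j.

Definition H_mx (R : realType) (n r : nat) : 'M[R]_n := adjmx R n (edgeH r).
Definition H'_mx (R : realType) (n r : nat) : 'M[R]_n := adjmx R n (edgeH' r).

(* Main.v *)
Require Import Defs.
From HB Require Import structures.
From mathcomp Require Import all_boot all_order all_algebra.
From mathcomp Require Import classical_sets reals.
From mathcomp Require Import zify ring lra.
Import Order.TTheory GRing.Theory Num.Theory.
Local Open Scope ring_scope.


Section Sums.
Variable R : realType.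

Definition cls (r k : nat) (a b c d : R) (j : nat) : R :=
  if (j == 0)%N then a else if (j <= 3 * r)%N then b
  else if (j <= 3 * r + k)%N then c else d.

Lemma split4 (F : nat -> R) p q n : (1 <= p)%N -> (p <= q)%N -> (q <= n)%N ->
  \sum_(j < n) F j = F 0%N + \sum_(1 <= j < p) F j + \sum_(p <= j < q) F j
     + \sum_(q <= j < n) F j.
Proof.
move=> h1 h2 h3.
rewrite -(big_mkord xpredT) (big_cat_nat (n:=q) (m:=0) (p:=n)) //.
rewrite (big_cat_nat (n:=p) (m:=0) (p:=q)) //.
rewrite (big_cat_nat (n:=1) (m:=0) (p:=p)) // big_nat1 //.
Qed.

Lemma sum_const_on (e : nat -> bool) (v : nat -> R) a b (bb : bool) K :
  (forall j, (a <= j < b)%N -> e j = bb /\ v j = K) ->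
  \sum_(a <= j < b) (e j)%:R * v j = ((b - a) * bb)%:R * K.
Proof.
move=> h; rewrite (eq_big_nat _ _ (F2 := fun _ => bb%:R * K)).
  by rewrite sumr_const_nat -mulrnAl; congr (_ * _); rewrite -mulr_natr -natrM mulnC.
by move=> j /h [-> ->].
Qed.

Lemma tri_count (e : nat -> bool) (v : nat -> R) r i b :
  (1 <= i <= 3 * r)%N ->
  (forall j, (1 <= j <= 3 * r)%N -> e j = (i != j) && (i.-1 %/ 3 == j.-1 %/ 3)%N /\ v j = b) ->
  \sum_(1 <= j < 3 * r + 1) (e j)%:R * v j = 2 * b.
Proof.
move=> hi h.
set q := (i.-1 %/ 3)%N.
have qdef : q = (i.-1 %/ 3)%N by [].
have hq : (3 * q + 3 <= 3 * r)%N by lia.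
rewrite (big_cat_nat (n := 3 * q + 1)) /=; [|lia|lia].
rewrite (big_cat_nat (n := 3 * q + 4) (m := 3 * q + 1)) /=; [|lia|lia].
rewrite (sum_const_on _ _ _ _ false b); last first.
  move=> j hj; have [he hv] := h j ltac:(lia); split => //.
  rewrite he; apply/idP/idP => //; lia.
rewrite [X in _ + (_ + X)](sum_const_on _ _ _ _ false b); last first.
  move=> j hj; have [he hv] := h j ltac:(lia); split => //.
  rewrite he; apply/idP/idP => //; lia.
rewrite !muln0 !mul0r add0r addr0.
rewrite big_ltn; last lia.
rewrite big_ltn; last lia.
rewrite big_ltn; last lia.
rewrite big_geq; last lia.
have [h1 v1] := h (3 * q + 1)%N ltac:(lia).
have [h2 v2] := h (3 * q + 1).+1 ltac:(lia).
have [h3 v3] := h (3 * q + 1).+2 ltac:(lia).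
rewrite h1 h2 h3 v1 v2 v3 -qdef.
have -> : ((3 * q + 1).-1 %/ 3 = q)%N by lia.
have -> : ((3 * q + 1).+1.-1 %/ 3 = q)%N by lia.
have -> : ((3 * q + 1).+2.-1 %/ 3 = q)%N by lia.
have hh : (i = 3 * q + 1 \/ i = 3 * q + 2 \/ i = 3 * q + 3)%N by lia.
rewrite eqxx !andbT.
rewrite addr0 -!mulrDl -!natrD.
congr (_%:R * _).
clear -hh; lia.
Qed.


Ltac edec := rewrite /edgeH /edgeH' /edge_K1rK3 /edge_bip /H_A /H_B /H'_A /H'_B /=;
  apply/idP/idP => //; lia.
Ltac cdec := rewrite /cls; repeat (case: ifP => ?); first [reflexivity | exfalso; lia].
Ltac sc bb K := rewrite (sum_const_on _ _ _ _ bb K); last by move=> j hj; split; [edec|cdec].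

Lemma sumH r n a b c d i : (3 * r + 3 <= n)%N -> (i < n)%N ->
  \sum_(j < n) (edgeH r i j)%:R * cls r 2 a b c d j =
  cls r 2 ((3 * r)%:R * b + (n - (3 * r + 3))%:R * d) (a + 2 * b)
          ((n - (3 * r + 3))%:R * d) (a + 2 * c) i.
Proof.
move=> hn hi.
rewrite (@split4 (fun j => (edgeH r i j)%:R * cls r 2 a b c d j) (3 * r + 1)%N (3 * r + 3)%N n); try lia.
have e1 : (3 * r + 1 - 1 = 3 * r)%N by lia.
have e2 : (3 * r + 3 - (3 * r + 1) = 2)%N by lia.
have c0 : cls r 2 a b c d 0 = a by [].
have : (i = 0 \/ (1 <= i <= 3 * r) \/ (3 * r + 1 <= i <= 3 * r + 2) \/ 3 * r + 3 <= i)%N by lia.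
case => [-> | [hT | [hA | hB]]].
- have -> : edgeH r 0 0 = false by edec.
  sc true b. sc false c. sc true d.
  rewrite !muln1 !muln0 ?e1 ?e2 ?c0 /cls /=. rewrite /=; ring.
- have -> : edgeH r i 0 = true by edec.
  rewrite (tri_count _ _ _ _ b hT); last first.
    move=> j hj; split; [apply/idP/idP; rewrite /edgeH /edge_K1rK3 /edge_bip /H_A /H_B /=; lia | cdec].
  sc false c. sc false d.
  have -> : forall A B C D, cls r 2 A B C D i = B by move=> *; cdec.
  rewrite !muln0 ?c0. rewrite /=; ring.
- have -> : edgeH r i 0 = false by edec.
  sc false b. sc false c. sc true d.
  have -> : forall A B C D, cls r 2 A B C D i = C by move=> *; cdec.
  rewrite !muln0 !muln1. rewrite /=; ring.
- have -> : edgeH r i 0 = true by edec.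
  sc false b. sc true c. sc false d.
  have -> : forall A B C D, cls r 2 A B C D i = D by move=> *; cdec.
  rewrite !muln0 !muln1 e2 c0. rewrite /=; ring.
Qed.

Lemma sumH' r n a b c d i : (3 * r + 4 <= n)%N -> (i < n)%N ->
  \sum_(j < n) (edgeH' r i j)%:R * cls r 3 a b c d j =
  cls r 3 ((3 * r)%:R * b + 3 * c) (a + 2 * b)
          (a + (n - (3 * r + 4))%:R * d) (3 * c) i.
Proof.
move=> hn hi.
rewrite (@split4 (fun j => (edgeH' r i j)%:R * cls r 3 a b c d j) (3 * r + 1)%N (3 * r + 4)%N n); try lia.
have e1 : (3 * r + 1 - 1 = 3 * r)%N by lia.
have e2 : (3 * r + 4 - (3 * r + 1) = 3)%N by lia.
have c0 : cls r 3 a b c d 0 = a by [].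
have : (i = 0 \/ (1 <= i <= 3 * r) \/ (3 * r + 1 <= i <= 3 * r + 3) \/ 3 * r + 4 <= i)%N by lia.
case => [-> | [hT | [hA | hB]]].
- have -> : edgeH' r 0 0 = false by edec.
  sc true b. sc true c. sc false d.
  rewrite !muln1 !muln0 ?e1 ?e2 ?c0 /cls /=. rewrite /=; ring.
- have -> : edgeH' r i 0 = true by edec.
  rewrite (tri_count _ _ _ _ b hT); last first.
    move=> j hj; split; [apply/idP/idP; rewrite /edgeH' /edge_K1rK3 /edge_bip /H'_A /H'_B /=; lia | cdec].
  sc false c. sc false d.
  have -> : forall A B C D, cls r 3 A B C D i = B by move=> *; cdec.
  rewrite !muln0 ?c0. rewrite /=; ring.
- have -> : edgeH' r i 0 = true by edec.
  sc false b. sc false c. sc true d.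
  have -> : forall A B C D, cls r 3 A B C D i = C by move=> *; cdec.
  rewrite !muln0 !muln1 ?c0. rewrite /=; ring.
- have -> : edgeH' r i 0 = false by edec.
  sc false b. sc true c. sc false d.
  have -> : forall A B C D, cls r 3 A B C D i = D by move=> *; cdec.
  rewrite !muln0 !muln1 ?e2 ?c0. rewrite /=; ring.
Qed.
End Sums.
Arguments cls [R] _ _ _ _ _ _ _.

Set Implicit Arguments. Unset Strict Implicit.

Section Lin.
Variable R : realType.
Variable n : nat.
Variable A : 'M[R]_n.
Hypothesis hs : forall i j, A i j = A j i.
Hypothesis hA : forall i j, 0 <= A i j.

Lemma compare_id (x z : 'I_n -> R) lam mu :
  (forall i, \sum_j A i j * x j = lam * x i) ->
  (lam - mu) * \sum_i x i * z i = \sum_i x i * (\sum_j A i j * z j - mu * z i).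
Proof.
move=> hxe.
have key : \sum_i x i * (\sum_j A i j * z j) = lam * \sum_i x i * z i.
  rewrite (eq_bigr (fun i => \sum_j x i * (A i j * z j))); last by move=> i _; rewrite mulr_sumr.
  rewrite exchange_big /= mulr_sumr; apply eq_bigr => j _.
  rewrite (eq_bigr (fun i => (A j i * x i) * z j)); last by move=> i _; rewrite (hs i j); ring.
  by rewrite -mulr_suml hxe; ring.
rewrite [RHS](eq_bigr (fun i => x i * (\sum_j A i j * z j) - mu * (x i * z i))); last by move=> i _; ring.
by rewrite sumrB -mulr_sumr key; ring.
Qed.

Lemma compare_le (x z : 'I_n -> R) lam mu (i0 : 'I_n) :
  (forall i, 0 < x i) -> (forall i, 0 < z i) ->
  (forall i, \sum_j A i j * x j = lam * x i) ->
  (forall i, mu * z i <= \sum_j A i j * z j) -> mu <= lam.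
Proof.
move=> hx hz hxe hzi.
have hX : 0 < \sum_i x i * z i.
  rewrite (bigD1 i0) //=; apply: ltr_pwDl; first by apply: mulr_gt0.
  by apply: sumr_ge0 => i _; apply: mulr_ge0; apply: ltW.
have hD : 0 <= (lam - mu) * \sum_i x i * z i.
  rewrite compare_id //; apply: sumr_ge0 => i _; apply: mulr_ge0; first exact: ltW.
  by rewrite subr_ge0.
by move: hD; rewrite pmulr_lge0 // subr_ge0.
Qed.

Lemma compare_lt (x z : 'I_n -> R) lam mu (k : 'I_n) :
  (forall i, 0 < x i) -> (forall i, 0 < z i) ->
  (forall i, \sum_j A i j * x j = lam * x i) ->
  (forall i, mu * z i <= \sum_j A i j * z j) ->
  mu * z k < \sum_j A k j * z j -> mu < lam.
Proof.
move=> hx hz hxe hzi hk.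
have hX : 0 < \sum_i x i * z i.
  rewrite (bigD1 k) //=; apply: ltr_pwDl; first by apply: mulr_gt0.
  by apply: sumr_ge0 => i _; apply: mulr_ge0; apply: ltW.
have hD : 0 < (lam - mu) * \sum_i x i * z i.
  rewrite compare_id // (bigD1 k) //=; apply: ltr_pwDl.
    by apply: mulr_gt0 => //; rewrite subr_gt0.
  apply: sumr_ge0 => i _; apply: mulr_ge0; first exact: ltW.
  by rewrite subr_ge0.
by move: hD; rewrite pmulr_lgt0 // subr_gt0.
Qed.

Lemma collatz (y : 'I_n -> R) c a :
  (forall i, 0 < y i) -> (forall i, \sum_j A i j * y j = c * y i) ->
  eigenvalue A a -> a <= c.
Proof.
move=> hy hye /eigenvalueP [v hv vn0].
have hvj : forall j, a * v 0 j = \sum_i A j i * v 0 i.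
  move=> j; move/rowP: hv => /(_ j); rewrite !mxE => <-.
  by apply: eq_bigr => i _; rewrite hs mulrC.
have [j0 hj0] : exists j, v 0 j != 0.
  case: (pickP (fun j => v 0 j != 0)) => [j hj|h]; first by exists j.
  move: vn0; have -> : v = 0; last by rewrite eqxx.
  by apply/rowP => j; rewrite !mxE; move: (h j) => /negbFE/eqP.
pose f := fun j => `|v 0 j| / y j.
case: (@arg_maxP _ R _ j0 xpredT f erefl) => j _ hjmax.
set t := f j in hjmax *.
have ht0 : 0 < t.
  apply: (lt_le_trans _ (hjmax j0 erefl)); rewrite /f divr_gt0 //.
  by rewrite normr_gt0.
have hvk : forall k, `|v 0 k| <= t * y k.
  move=> k; have := hjmax k erefl; rewrite /= /f ler_pdivrMr //.
have hvjt : `|v 0 j| = t * y j by rewrite /t /f divfK //; apply: lt0r_neq0.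
have : `|a| * `|v 0 j| <= c * `|v 0 j|.
  rewrite -normrM hvj.
  apply: (le_trans (ler_norm_sum _ _ _)).
  apply: (@le_trans _ _ (\sum_i A j i * (t * y i))).
    apply: ler_sum => i _; rewrite normrM ger0_norm //.
    by apply: ler_wpM2l.
  rewrite (eq_bigr (fun i => t * (A j i * y i))); last by move=> i _; ring.
  by rewrite -mulr_sumr hye hvjt; lra.
rewrite ler_pM2r; last by rewrite hvjt mulr_gt0.
by move=> h; apply: le_trans h; apply: ler_norm.
Qed.

Lemma spec_rad_perron (x : 'I_n -> R) lam (i0 : 'I_n) :
  (forall i, 0 < x i) -> (forall i, \sum_j A i j * x j = lam * x i) ->
  spec_rad A = lam.
Proof.
move=> hx hxe.
have ev : eigenvalue A lam.
  apply/eigenvalueP; exists (\row_j x j).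
    apply/rowP => j; rewrite !mxE -hxe.
    by apply: eq_bigr => i _; rewrite !mxE hs mulrC.
  apply/eqP => /rowP /(_ i0); rewrite !mxE => h.
  by move: (hx i0); rewrite h ltxx.
have ub : ubound [set a : R | eigenvalue A a] lam.
  by move=> a /= ha; apply: (collatz hx hxe ha).
rewrite /spec_rad; apply/eqP; rewrite eq_le; apply/andP; split.
  by apply: ge_sup => //; exists lam.
by apply: ub_le_sup => //; exists lam.
Qed.
End Lin.

Section Main.
Variable R : realType.

Lemma lin_eq (X Y E k : R) : E = 0 -> X - Y = k * E -> X = Y.
Proof. by move=> -> h; apply/eqP; rewrite -subr_eq0 h mulr0. Qed.

Lemma cls_rel (P : R -> R -> Prop) r k a b c d a' b' c' d' i :
  P a a' -> P b b' -> P c c' -> P d d' ->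
  P (cls r k a b c d i) (cls r k a' b' c' d' i).
Proof.
move=> ha hb hc hd; rewrite /cls.
by case: (i == 0)%N => //; case: (i <= 3 * r)%N => //; case: (i <= 3 * r + k)%N.
Qed.

Lemma root_exists (c K rr : R) : 4 < c -> 0 < K -> 0 <= rr ->
  exists l, [/\ 2 < l, c < l ^+ 2 &
    l * (l - 2) * (l ^+ 2 - c) - 3 * rr * (l ^+ 2 - c) - K * l * (l - 2) = 0].
Proof.
move=> hc hK hr.
pose p : {poly R} := 'X * ('X - 2%:P) * ('X^2 - c%:P) - (3 * rr)%:P * ('X^2 - c%:P)
   - K%:P * 'X * ('X - 2%:P).
have pE : forall x, p.[x] = x * (x - 2) * (x ^+ 2 - c) - 3 * rr * (x ^+ 2 - c) - K * x * (x - 2).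
  by move=> x; rewrite /p !hornerE.
set a := Num.sqrt c.
have ha2 : a ^+ 2 = c by rewrite sqr_sqrtr //; lra.
have ha0 : 0 <= a by apply: sqrtr_ge0.
have a2 : 2 < a by nra.
set b := 3 * rr + c + 2 * K + 3.
have pa : p.[a] < 0.
  have : 0 < K * a * (a - 2) by apply: mulr_gt0; [apply: mulr_gt0|]; lra.
  rewrite pE ha2 subrr !mulr0; lra.
have pb : 0 <= p.[b].
  rewrite pE.
  have hu : 2 * K <= b ^+ 2 - c by rewrite /b; nra.
  have hw : 6 * rr <= b * (b - 2) by rewrite /b; nra.
  have -> : b * (b - 2) * (b ^+ 2 - c) - 3 * rr * (b ^+ 2 - c) - K * b * (b - 2)
     = (b ^+ 2 - c) * (b * (b - 2) - 3 * rr) - K * (b * (b - 2)) by ring.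
  have h1 : 2 * K * (b * (b - 2) - 3 * rr) <= (b ^+ 2 - c) * (b * (b - 2) - 3 * rr).
    by apply: ler_wpM2r => //; lra.
  nra.
have hab : a <= b by rewrite /b; nra.
have hpab : p.[a] <= 0 <= p.[b] by rewrite (ltW pa) pb.
have [x /andP [hax hxb] hx] := poly_ivt hab hpab.
have pr : p.[x] = 0 by apply/eqP.
have hxa : a < x.
  rewrite lt_neqAle hax andbT; apply/eqP => hh.
  by move: pa; rewrite hh pr ltxx.
exists x; split; [lra | nra | by rewrite -pE].
Qed.
End Main.

Unset Implicit Arguments. Set Strict Implicit.

Lemma edgeH_sym r i j : edgeH r i j = edgeH r j i.
Proof. rewrite /edgeH /edge_K1rK3 /edge_bip /H_A /H_B; apply/idP/idP; lia. Qed.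
Lemma edgeH'_sym r i j : edgeH' r i j = edgeH' r j i.
Proof. rewrite /edgeH' /edge_K1rK3 /edge_bip /H'_A /H'_B; apply/idP/idP; lia. Qed.

Lemma cls_pos (R : realType) r k (a b c d : R) i :
  0 < a -> 0 < b -> 0 < c -> 0 < d -> 0 < cls r k a b c d i.
Proof. by move=> *; rewrite /cls; case: ifP => _ //; case: ifP => _ //; case: ifP. Qed.
Lemma cls_eq (R : realType) r k (l a b c d a' b' c' d' : R) i :
  a' = l * a -> b' = l * b -> c' = l * c -> d' = l * d ->
  cls r k a' b' c' d' i = l * cls r k a b c d i.
Proof. by move=> *; rewrite /cls; case: ifP => _ //; case: ifP => _ //; case: ifP. Qed.
Lemma cls_le (R : realType) r k (l a b c d a' b' c' d' : R) i :
  l * a <= a' -> l * b <= b' -> l * c <= c' -> l * d <= d' ->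
  l * cls r k a b c d i <= cls r k a' b' c' d' i.
Proof. by move=> *; rewrite /cls; case: ifP => _ //; case: ifP => _ //; case: ifP. Qed.
Lemma eqle (R : realType) (x y : R) : x = y -> x <= y.
Proof. by move=> ->. Qed.

Theorem lemma4p2 (R : realType) (r n : nat) :
  (1 <= r)%N -> (3 * r + 6 <= n)%N ->
  spec_rad (H'_mx R n r) <= spec_rad (H_mx R n r) /\
  (spec_rad (H_mx R n r) = spec_rad (H'_mx R n r) <-> n = (3 * r + 6)%N).
Proof.
move=> hr hn.
have hm4_of : n != (3 * r + 6)%N -> (3 < n - (3 * r + 3))%N by lia.
have hm_of : n = (3 * r + 6)%N -> (n - (3 * r + 3) = 3)%N by lia.
have hm3 : (3 <= n - (3 * r + 3))%N by lia.
set m := (n - (3 * r + 3))%N in hm3 *.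
have hn0 : (0 < n)%N by lia.
pose i0 := Ordinal hn0.
have hk : (3 * r + 3 < n)%N by lia.
pose k := Ordinal hk.
have ck : forall (a b c d : R), cls r 2 a b c d k = d.
  move=> a b c d; rewrite /cls /=.
  have -> : (3 * r + 3 == 0)%N = false by lia.
  have -> : (3 * r + 3 <= 3 * r)%N = false by lia.
  have -> : (3 * r + 3 <= 3 * r + 2)%N = false by lia.
  done.
have hn3 : (3 * r + 3 <= n)%N by lia.
have hn4 : (3 * r + 4 <= n)%N by lia.
set mR : R := m%:R.
have mR3 : 3 <= mR by rewrite /mR ler_nat.
set rR : R := r%:R.
have rR1 : 1 <= rR by rewrite /rR ler1n; lia.
have hm1 : (n - (3 * r + 4))%:R = mR - 1 :> R.
  have -> : (n - (3 * r + 4) = m - 1)%N by rewrite /m; lia.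
  by rewrite natrB ?mulr1n //; lia.
have h3r : (3 * r)%:R = 3 * rR :> R by rewrite natrM.
set c1 := 2 * mR.
set c2 := 3 * (mR - 1).
have [l [hl2 hlc hP]] := @root_exists R c1 mR rR ltac:(rewrite /c1; lra) ltac:(lra) ltac:(lra).
have [u [hu2 huc hQ]] := @root_exists R c2 3 rR ltac:(rewrite /c2; lra) ltac:(lra) ltac:(lra).
pose xv := fun i : 'I_n => cls r 2 ((l - 2) * (l ^+ 2 - c1)) (l ^+ 2 - c1) (mR * (l - 2)) (l * (l - 2)) i.
pose yv := fun i : 'I_n => cls r 3 ((u - 2) * (u ^+ 2 - c2)) (u ^+ 2 - c2) (u * (u - 2)) (3 * (u - 2)) i.
pose zv := fun i : 'I_n => cls r 2 (mR * ((u - 2) * (u ^+ 2 - c2))) (mR * (u ^+ 2 - c2))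
   (mR * (3 * (u - 2))) (3 * (u * (u - 2))) i.
have Hs : forall i j, H_mx R n r i j = H_mx R n r j i.
  by move=> i j; rewrite !mxE edgeH_sym.
have H's : forall i j, H'_mx R n r i j = H'_mx R n r j i.
  by move=> i j; rewrite !mxE edgeH'_sym.
have HA : forall i j, 0 <= H_mx R n r i j by move=> i j; rewrite mxE ler0n.
have H'A : forall i j, 0 <= H'_mx R n r i j by move=> i j; rewrite mxE ler0n.
have sH : forall (a b c d : R) (i : 'I_n), \sum_j H_mx R n r i j * cls r 2 a b c d j =
   cls r 2 (3 * rR * b + mR * d) (a + 2 * b) (mR * d) (a + 2 * c) i.
  move=> a b c d i; rewrite (eq_bigr (fun j : 'I_n => (edgeH r i j)%:R * cls r 2 a b c d j)); last first.
    by move=> j _; rewrite mxE.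
  by rewrite (sumH R r n a b c d i hn3 (ltn_ord i)) -/m h3r.
have sH' : forall (a b c d : R) (i : 'I_n), \sum_j H'_mx R n r i j * cls r 3 a b c d j =
   cls r 3 (3 * rR * b + 3 * c) (a + 2 * b) (a + (mR - 1) * d) (3 * c) i.
  move=> a b c d i; rewrite (eq_bigr (fun j : 'I_n => (edgeH' r i j)%:R * cls r 3 a b c d j)); last first.
    by move=> j _; rewrite mxE.
  by rewrite (sumH' R r n a b c d i hn4 (ltn_ord i)) hm1 h3r.
have hl0 : 0 < l - 2 by lra.
have hl1 : 0 < l ^+ 2 - c1 by lra.
have hu0 : 0 < u - 2 by lra.
have hu1 : 0 < u ^+ 2 - c2 by lra.
have mR0 : 0 < mR by lra.
have hxpos : forall i, 0 < xv i.
  move=> i; apply: cls_pos; do ?apply: mulr_gt0 => //; lra.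
have hypos : forall i, 0 < yv i.
  move=> i; apply: cls_pos; do ?apply: mulr_gt0 => //; lra.
have hzpos : forall i, 0 < zv i.
  move=> i; apply: cls_pos; do ?apply: mulr_gt0 => //; lra.
have hxe : forall i, \sum_j H_mx R n r i j * xv j = l * xv i.
  move=> i; rewrite /xv sH; apply: cls_eq.
  - by apply: (lin_eq (k := -1) hP); ring.
  - by ring.
  - by ring.
  - by rewrite /c1; ring.
have hye : forall i, \sum_j H'_mx R n r i j * yv j = u * yv i.
  move=> i; rewrite /yv sH'; apply: cls_eq.
  - by apply: (lin_eq (k := -1) hQ); ring.
  - by ring.
  - by rewrite /c2; ring.
  - by ring.
have hu3m : 3 * mR < u ^+ 2.
  have e : u * (u - 2) * (u ^+ 2 - c2 - 3) = 3 * rR * (u ^+ 2 - c2).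
    by apply: (lin_eq (k := 1) hQ); ring.
  have : 0 < u * (u - 2) * (u ^+ 2 - c2 - 3).
    by rewrite e; apply: mulr_gt0 => //; lra.
  rewrite pmulr_rgt0; last by apply: mulr_gt0; lra.
  by rewrite /c2; lra.
have keyB : u * (3 * (u * (u - 2))) - (mR * ((u - 2) * (u ^+ 2 - c2)) + 2 * (mR * (3 * (u - 2))))
   = - ((u - 2) * (mR - 3) * (u ^+ 2 - 3 * mR)) by rewrite /c2; ring.
have hzi : forall i, u * zv i <= \sum_j H_mx R n r i j * zv j.
  move=> i; rewrite /zv sH; apply: cls_le.
  - by apply: eqle; apply: (lin_eq (k := mR) hQ); ring.
  - by apply: eqle; ring.
  - by apply: eqle; ring.
  - rewrite -subr_le0 keyB oppr_le0; apply: mulr_ge0; last by lra.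
    by apply: mulr_ge0; lra.
have rhoH : spec_rad (H_mx R n r) = l := spec_rad_perron Hs HA i0 hxpos hxe.
have rhoH' : spec_rad (H'_mx R n r) = u := spec_rad_perron H's H'A i0 hypos hye.
have hle : u <= l := compare_le Hs i0 hxpos hzpos hxe hzi.
rewrite rhoH rhoH'; split => //; split.
- move=> hlu; case: (eqVneq n (3 * r + 6)%N) => // hne; exfalso.
  have hm4 : (3 < m)%N by apply: hm4_of.
  have mR4 : 3 < mR by rewrite /mR ltr_nat.
  have hst : u * zv k < \sum_j H_mx R n r k j * zv j.
    rewrite /zv sH !ck -subr_lt0 keyB oppr_lt0; apply: mulr_gt0; last by lra.
    by apply: mulr_gt0; lra.
  have := compare_lt Hs hxpos hzpos hxe hzi hst; lra.
- move=> hn6.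
  have hm : m = 3%N by apply: hm_of.
  have mR3e : mR = 3 by rewrite /mR hm.
  have hze : forall i, \sum_j H_mx R n r i j * zv j = u * zv i.
    move=> i; rewrite /zv sH; apply: cls_eq.
    - by apply: (lin_eq (k := - mR) hQ); ring.
    - by ring.
    - by ring.
    - by rewrite /c2 mR3e; ring.
  have hxi : forall i, l * xv i <= \sum_j H_mx R n r i j * xv j by move=> i; rewrite hxe.
  have := compare_le Hs i0 hzpos hxpos hze hxi; lra.
Qed.
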